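(* Let $G$ be the lattice $\mathbb Z$ (neighbours $x\pm1$), unweighted, with $\mu\equiv1$, so $\Delta u(x)=u(x+1)-2u(x)+u(x-1)$ and $L=-\Delta$. Then for every $v:\mathbb Z\to\mathbb R$ and $x\in\mathbb Z$, $$\Delta\Psi_{\Upsilon'}(v)(x)\ge2e^{-Lv(x)/2}\,\Upsilon(Lv(x))+\Theta(v)(x),\qquad \Theta(v)(x):=\sum_{y\in\{x-1,x+1\}}e^{v(y)-v(x)}\big(e^{-Lv(y)}-1+Lv(x)\big).$$ Moreover, if $Lv(x)\ge1$, then $\Theta(v)(x)\ge2e^{-Lv(x)/2}(Lv(x)-1)$.
   Context: $\Psi_H(v)(x)=\sum_{y\in\{x-1,x+1\}}H(v(y)-v(x))$; $\Upsilon(z)=e^z-1-z$, $\Upsilon'(z)=e^z-1$. *)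

(* Defs.v *)
From Stdlib Require Import Reals ZArith.
Open Scope R_scope.

Definition Upsilon (z : R) : R := exp z - 1 - z.
Definition Upsilon' (z : R) : R := exp z - 1.

Definition LapZ (u : Z -> R) (x : Z) : R :=
  u (x + 1)%Z - 2 * u x + u (x - 1)%Z.
Definition Lop (u : Z -> R) (x : Z) : R := - LapZ u x.

Definition Psi (H : R -> R) (v : Z -> R) (x : Z) : R :=
  H (v (x - 1)%Z - v x) + H (v (x + 1)%Z - v x).

Definition Theta (v : Z -> R) (x : Z) : R :=
  exp (v (x - 1)%Z - v x) * (exp (- Lop v (x - 1)%Z) - 1 + Lop v x)
  + exp (v (x + 1)%Z - v x) * (exp (- Lop v (x + 1)%Z) - 1 + Lop v x).

(* Main.v *)
Require Import Defs.
From Stdlib Require Import Reals ZArith Lra Psatz Rpower.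
Open Scope R_scope.

Lemma alg (A B C D K E P Q A' B' l : R) :
  0 < A -> 0 < B -> 0 < E -> 0 < P -> 0 < Q -> E * E = A * B -> 1 + l <= K ->
  A * P = D -> B * Q = C -> A' = K * B -> B' = K * A ->
  (B' - 1 + (C - 1)) - 2 * (A - 1 + (B - 1)) + (D - 1 + (A' - 1)) >=
    2 * E * (K - 1 - l) + (A * (P - 1 + l) + B * (Q - 1 + l))
  /\ (l >= 1 -> A * (P - 1 + l) + B * (Q - 1 + l) >= 2 * E * (l - 1)).
Proof.
  intros HA HB HE HP0 HQ0 HEE Hl HP HQ HA' HB'.
  assert (HS : A + B - 2 * E >= 0).
  { assert (H1 : (A + B - 2*E) * (A + B + 2*E) = (A - B)^2).
    { replace ((A + B - 2*E) * (A + B + 2*E)) with ((A+B)*(A+B) - 4*(E*E)) by ring.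
      rewrite HEE. ring. }
    destruct (Rle_or_lt 0 (A + B - 2*E)) as [h|h]; [lra|].
    assert (0 < A + B + 2*E) by lra.
    assert ((A + B - 2*E) * (A + B + 2*E) < 0) by (apply Rmult_neg_pos; lra).
    assert (0 <= (A-B)^2) by (apply pow2_ge_0). lra. }
  assert (HD : 0 < D) by (subst; apply Rmult_lt_0_compat; lra).
  assert (HC : 0 < C) by (subst; apply Rmult_lt_0_compat; lra).
  assert (E1 : A * (P - 1 + l) + B * (Q - 1 + l) = D + C + (l - 1) * (A + B)) by (rewrite <- HP, <- HQ; ring).
  rewrite E1. split.
  - assert (E2 : (B' - 1 + (C - 1)) - 2 * (A - 1 + (B - 1)) + (D - 1 + (A' - 1)) = D + C + (K - 2) * (A + B)) by (subst; ring).
    rewrite E2.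
    assert (0 <= (K - 1 - l) * (A + B - 2 * E)) by (apply Rmult_le_pos; lra).
    nra.
  - intros Hl1.
    assert (0 <= (l - 1) * (A + B - 2 * E)) by (apply Rmult_le_pos; lra).
    nra.
Qed.

Theorem lemma5p5 :
  forall (v : Z -> R) (x : Z),
    LapZ (Psi Upsilon' v) x >=
      2 * exp (- Lop v x / 2) * Upsilon (Lop v x) + Theta v x
    /\ (Lop v x >= 1 ->
        Theta v x >= 2 * exp (- Lop v x / 2) * (Lop v x - 1)).
Proof.
  intros v x.
  unfold Theta, Upsilon, LapZ, Psi, Upsilon'.
  set (l := Lop v x).
  assert (Hl : l = 2 * v x - v (x+1)%Z - v (x-1)%Z) by (unfold l, Lop, LapZ; ring).
  clearbody l.
  unfold Lop, LapZ.
  replace (x + 1 - 1)%Z with x by ring.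
  replace (x - 1 + 1)%Z with x by ring.
  apply (alg (exp (v (x-1)%Z - v x)) (exp (v (x+1)%Z - v x))
             (exp (v (x+1+1)%Z - v (x+1)%Z)) (exp (v (x-1-1)%Z - v (x-1)%Z))
             (exp l) (exp (- l / 2))).
  - apply exp_pos.
  - apply exp_pos.
  - apply exp_pos.
  - apply exp_pos.
  - apply exp_pos.
  - rewrite <- !exp_plus. f_equal. rewrite Hl. field.
  - apply exp_ineq1_le.
  - rewrite <- exp_plus. f_equal. ring.
  - rewrite <- exp_plus. f_equal. ring.
  - rewrite <- exp_plus. f_equal. rewrite Hl. ring.
  - rewrite <- exp_plus. f_equal. rewrite Hl. ring.
Qed.
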